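(* Let $Q$ be a commutative A-loop. For $n\ge 0$ let $H_n(Q)=\{x\in Q : x^{2^n}=1\}$ and $H(Q)=\bigcup_{n\ge 0}H_n(Q)$. Then: (i) $H_{n+1}(Q)=\{x\in Q : x^2\in H_n(Q)\}$ for every $n\ge 0$; (ii) $H_{n+1}(Q)\supseteq H_n(Q)$ for every $n\ge 0$; (iii) $H_n(Q)$ is a normal subloop of $Q$ for every $n\ge 0$; (iv) $H(Q)$ is a normal subloop of $Q$.
   Context: A loop is a set with a binary operation and neutral element $1$ in which all left and right translations are bijections; $\mathrm{Inn}(Q)$ is the stabilizer of $1$ in the group generated by all translations. A commutative A-loop is a commutative loop all of whose inner mappings are automorphisms. Such loops are power-associative, so powers are unambiguous. A normal subloop is a subloop invariant under all inner mappings. *)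

(* Defs.v *)
From mathcomp Require Import ssreflect ssrfun ssrbool ssrnat.

Set Implicit Arguments.
Unset Strict Implicit.
Unset Printing Implicit Defensive.

Section Loops.
Variables (T : Type) (op : T -> T -> T) (e : T).

Definition is_loop : Prop :=
  [/\ (forall x, op e x = x), (forall x, op x e = x),
      (forall a, bijective (op a)) & (forall a, bijective (fun x => op x a))].

Inductive mlt : (T -> T) -> Prop :=
| mlt_L a : mlt (op a)
| mlt_R a : mlt (fun x => op x a)
| mlt_id : mlt id
| mlt_comp f g : mlt f -> mlt g -> mlt (f \o g)
| mlt_inv f g : mlt f -> cancel f g -> cancel g f -> mlt g.

Definition inner_mapping (f : T -> T) : Prop := mlt f /\ f e = e.

Definition commutative_A_loop : Prop :=
  [/\ is_loop, (forall x y, op x y = op y x) &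
      (forall f, inner_mapping f -> forall x y, f (op x y) = op (f x) (f y))].

(* Powers (unambiguous by power-associativity): x^0 = 1, x^(n+1) = x x^n. *)
Fixpoint lpow (x : T) (n : nat) : T :=
  match n with 0 => e | n'.+1 => op x (lpow x n') end.

Definition subloop (S : T -> Prop) : Prop :=
  [/\ S e, (forall a b, S a -> S b -> S (op a b)),
      (forall a b x, S a -> S b -> op a x = b -> S x) &
      (forall a b x, S a -> S b -> op x a = b -> S x)].

Definition normal_subloop (S : T -> Prop) : Prop :=
  subloop S /\ (forall f, inner_mapping f -> forall x, S x -> S (f x)).

Definition H_n (n : nat) (x : T) : Prop := lpow x (2 ^ n) = e.
Definition H_all (x : T) : Prop := exists n, H_n n x.

End Loops.

(* Main.v *)
Require Import Defs.
From mathcomp Require Import ssreflect ssrfun ssrbool ssrnat.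
From Stdlib Require Import ClassicalEpsilon.
Set Implicit Arguments.
Unset Strict Implicit.

Definition ldiv (T : Type) (op : T -> T -> T) (a b : T) : T :=
  epsilon (inhabits b) (fun x => op a x = b).

Set Implicit Arguments.
Unset Strict Implicit.

Lemma cal_lid T (op : T -> T -> T) e (HQ : commutative_A_loop op e) x : op e x = x.
Proof. by case: HQ => [[]]. Qed.
Lemma cal_rid T (op : T -> T -> T) e (HQ : commutative_A_loop op e) x : op x e = x.
Proof. by case: HQ => [[]]. Qed.
Lemma cal_comm T (op : T -> T -> T) e (HQ : commutative_A_loop op e) x y : op x y = op y x.
Proof. by case: HQ. Qed.
Lemma cal_bij T (op : T -> T -> T) e (HQ : commutative_A_loop op e) a : bijective (op a).
Proof. by case: HQ => [[]]. Qed.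
Lemma cal_aut T (op : T -> T -> T) e (HQ : commutative_A_loop op e) f :
  mlt op f -> f e = e -> forall x y, f (op x y) = op (f x) (f y).
Proof. by case: HQ => _ _ H Hm He; apply: H. Qed.

Lemma ldivK T (op : T -> T -> T) e (HQ : commutative_A_loop op e) a b :
  op a (ldiv op a b) = b.
Proof.
rewrite /ldiv; apply: (epsilon_spec (inhabits b) (fun x => op a x = b)).
case: (cal_bij HQ a) => g _ gK; exists (g b); exact: gK.
Qed.
Lemma ldiv_uniq T (op : T -> T -> T) e (HQ : commutative_A_loop op e) a b x :
  op a x = b -> x = ldiv op a b.
Proof.
move=> H; case: (cal_bij HQ a) => g fK _.
by rewrite -(fK x) -(fK (ldiv op a b)) (ldivK HQ) H.
Qed.
Lemma mulK T (op : T -> T -> T) e (HQ : commutative_A_loop op e) a x :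
  ldiv op a (op a x) = x.
Proof. by symmetry; apply: (ldiv_uniq HQ). Qed.
Lemma mul_inj T (op : T -> T -> T) e (HQ : commutative_A_loop op e) a x y :
  op a x = op a y -> x = y.
Proof. by move=> H; rewrite -(mulK HQ a x) H (mulK HQ). Qed.

Lemma mlt_ldiv T (op : T -> T -> T) e (HQ : commutative_A_loop op e) a :
  mlt op (ldiv op a).
Proof.
apply: (mlt_inv (mlt_L op a)) => x; [exact: (mulK HQ) | exact: (ldivK HQ)].
Qed.

Definition phi T (op : T -> T -> T) (x y z : T) := ldiv op (op x y) (op x (op y z)).
Definition psi T (op : T -> T -> T) (x y w : T) := ldiv op y (ldiv op x (op (op x y) w)).

Lemma mlt_phi T (op : T -> T -> T) e (HQ : commutative_A_loop op e) x y :
  mlt op (phi op x y).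
Proof.
have -> : phi op x y = ldiv op (op x y) \o (op x \o op y) by [].
apply: mlt_comp; first exact: (mlt_ldiv HQ).
by apply: mlt_comp; apply: mlt_L.
Qed.
Lemma mlt_psi T (op : T -> T -> T) e (HQ : commutative_A_loop op e) x y :
  mlt op (psi op x y).
Proof.
have -> : psi op x y = ldiv op y \o (ldiv op x \o op (op x y)) by [].
apply: mlt_comp; first exact: (mlt_ldiv HQ).
by apply: mlt_comp; [exact: (mlt_ldiv HQ)|apply: mlt_L].
Qed.
Lemma phi_e T (op : T -> T -> T) e (HQ : commutative_A_loop op e) x y : phi op x y e = e.
Proof. by rewrite /phi (cal_rid HQ) -{2}(cal_rid HQ (op x y)) (mulK HQ). Qed.
Lemma psi_e T (op : T -> T -> T) e (HQ : commutative_A_loop op e) x y : psi op x y e = e.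
Proof.
by rewrite /psi (cal_rid HQ) (mulK HQ) -{2}(cal_rid HQ y) (mulK HQ).
Qed.
Lemma phi_inner T (op : T -> T -> T) e (HQ : commutative_A_loop op e) x y :
  inner_mapping op e (phi op x y).
Proof. split; [exact: (mlt_phi HQ) | exact: (phi_e HQ)]. Qed.
Lemma psi_inner T (op : T -> T -> T) e (HQ : commutative_A_loop op e) x y :
  inner_mapping op e (psi op x y).
Proof. split; [exact: (mlt_psi HQ) | exact: (psi_e HQ)]. Qed.
Lemma phiM T (op : T -> T -> T) e (HQ : commutative_A_loop op e) x y z w :
  phi op x y (op z w) = op (phi op x y z) (phi op x y w).
Proof. apply: (cal_aut HQ); [exact: (mlt_phi HQ)|exact: (phi_e HQ)]. Qed.
Lemma phiP T (op : T -> T -> T) e (HQ : commutative_A_loop op e) x y z :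
  op (op x y) (phi op x y z) = op x (op y z).
Proof. exact: (ldivK HQ). Qed.
Lemma psiP T (op : T -> T -> T) e (HQ : commutative_A_loop op e) x y w :
  op x (op y (psi op x y w)) = op (op x y) w.
Proof. by rewrite /psi !(ldivK HQ). Qed.
Lemma phi_psi T (op : T -> T -> T) e (HQ : commutative_A_loop op e) x y w :
  phi op x y (psi op x y w) = w.
Proof. by rewrite /phi (psiP HQ) (mulK HQ). Qed.
Lemma psi_phi T (op : T -> T -> T) e (HQ : commutative_A_loop op e) x y z :
  psi op x y (phi op x y z) = z.
Proof. by rewrite /psi (phiP HQ) !(mulK HQ). Qed.
Lemma phi_x T (op : T -> T -> T) e (HQ : commutative_A_loop op e) x y :
  phi op x y x = x.
Proof. by rewrite /phi (cal_comm HQ y x) (cal_comm HQ x (op x y)) (mulK HQ). Qed.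

Lemma aut_inv T (op : T -> T -> T) e (HQ : commutative_A_loop op e) (f : T -> T) x :
  (forall a b, f (op a b) = op (f a) (f b)) -> f e = e ->
  f (ldiv op x e) = ldiv op (f x) e.
Proof.
move=> fM fe; apply: (ldiv_uniq HQ); by rewrite -fM (ldivK HQ).
Qed.

Lemma phi_pow T (op : T -> T -> T) e (HQ : commutative_A_loop op e) x y j :
  phi op x y (lpow op e x j) = lpow op e x j.
Proof.
elim: j => [|j IH] /=; first exact: (phi_e HQ).
by rewrite (phiM HQ) IH (phi_x HQ).
Qed.
Lemma lpowD T (op : T -> T -> T) e (HQ : commutative_A_loop op e) x i j :
  lpow op e x (i + j) = op (lpow op e x i) (lpow op e x j).
Proof.
elim: i => [|i IH] /=; first by rewrite (cal_lid HQ).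
by rewrite IH -(phiP HQ) (phi_pow HQ).
Qed.
Lemma lpowM T (op : T -> T -> T) e (HQ : commutative_A_loop op e) x i j :
  lpow op e x (i * j) = lpow op e (lpow op e x i) j.
Proof.
elim: j => [|j IH] /=; first by rewrite muln0.
by rewrite mulnS (lpowD HQ) IH.
Qed.

Lemma aip T (op : T -> T -> T) e (HQ : commutative_A_loop op e) u t :
  ldiv op (op u t) e = op (ldiv op u e) (ldiv op t e).
Proof.
set x := op u t. set y := ldiv op x u.
have xy : op x y = u by exact: (ldivK HQ).
have fM := phiM HQ x y. have fe := phi_e HQ x y.
have H1 : phi op x y (ldiv op x e) = ldiv op x e.
  by rewrite (aut_inv HQ) // (phi_x HQ).
have H2 : phi op x y (ldiv op y e) = t.
  by rewrite /phi (ldivK HQ) (cal_rid HQ) xy (mulK HQ).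
have H3 : phi op x y y = ldiv op t e.
  apply: (ldiv_uniq HQ); by rewrite (cal_comm HQ) -H2 -fM (ldivK HQ).
have H4 : phi op x y (ldiv op y (ldiv op x e)) = ldiv op u e.
  by rewrite /phi !(ldivK HQ) ?xy.
have := fM y (ldiv op y (ldiv op x e)).
rewrite (ldivK HQ) H1 H3 H4 => ->.
exact: (cal_comm HQ).
Qed.

Lemma ldiv_e T (op : T -> T -> T) e (HQ : commutative_A_loop op e) w : ldiv op e w = w.
Proof. by symmetry; apply: (ldiv_uniq HQ); rewrite (cal_lid HQ). Qed.

Lemma half T (op : T -> T -> T) e (HQ : commutative_A_loop op e) x :
  op x (ldiv op (op x x) e) = ldiv op x e.
Proof.
have H := aut_inv HQ x (phiM HQ x (ldiv op x e)) (phi_e HQ x (ldiv op x e)).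
rewrite (phi_x HQ) in H; move: H; rewrite /phi.
rewrite {1}(ldivK HQ x e) (ldiv_e HQ) => H.
by rewrite (aip HQ).
Qed.

Lemma normal_ext T (op : T -> T -> T) e (S S' : T -> Prop) :
  (forall x, S x <-> S' x) -> normal_subloop op e S -> normal_subloop op e S'.
Proof.
move=> E [[H1 H2 H3 H4] H5]; split; first split.
- by apply/E.
- by move=> a b /E Ha /E Hb; apply/E; apply: (H2).
- by move=> a b x /E Ha /E Hb Hx; apply/E; apply: (H3 a b).
- by move=> a b x /E Ha /E Hb Hx; apply/E; apply: (H4 a b).
- by move=> f Hf x /E Hx; apply/E; apply: (H5).
Qed.

Lemma sub_inv T (op : T -> T -> T) e (HQ : commutative_A_loop op e) S :
  normal_subloop op e S -> forall w, S w -> S (ldiv op w e).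
Proof.
move=> [[H1 H2 H3 H4] H5] w Hw; apply: (H3 w e) => //; exact: (ldivK HQ).
Qed.
Lemma sub_inv' T (op : T -> T -> T) e (HQ : commutative_A_loop op e) S :
  normal_subloop op e S -> forall w, S (ldiv op w e) -> S w.
Proof.
move=> [[H1 H2 H3 H4] H5] w Hw; apply: (H3 (ldiv op w e) e) => //.
by rewrite (cal_comm HQ) (ldivK HQ).
Qed.

Lemma GC T (op : T -> T -> T) e (HQ : commutative_A_loop op e) S :
  normal_subloop op e S -> forall a b s r, S s ->
  exists r', op (op a s) (op b r) = op (op a b) r' /\ (S r' <-> S r).
Proof.
move=> HS a b s r Hs; have [[H1 H2 H3 H4] H5] := HS.
set p := op a s.
set r2 := phi op b a s.
set q := phi op p b r.
exists (op r2 (psi op (op a b) r2 q)); split.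
  rewrite -(phiP HQ p b r) -/q (psiP HQ) (cal_comm HQ p b) /p -(phiP HQ b a s).
  by rewrite (cal_comm HQ b a).
have Sr2 : S r2 by apply: (H5); [exact: (phi_inner HQ) | done].
split=> Hr.
- have Sq : S (psi op (op a b) r2 q) by apply: (H3 r2 _ _ Sr2 Hr).
  have Sq' : S q.
    by rewrite -(phi_psi HQ (op a b) r2 q); apply: (H5) => //; exact: (phi_inner HQ).
  by rewrite -(psi_phi HQ p b r); apply: (H5) => //; exact: (psi_inner HQ).
- apply: (H2) => //; apply: (H5); first exact: (psi_inner HQ).
  by apply: (H5) => //; exact: (phi_inner HQ).
Qed.

Lemma step T (op : T -> T -> T) e (HQ : commutative_A_loop op e) S :
  normal_subloop op e S -> normal_subloop op e (fun x => S (op x x)).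
Proof.
move=> HS; have [[H1 H2 H3 H4] H5] := HS.
have key : forall a x b, S (op a a) -> S (op b b) -> op a x = b -> S (op x x).
  move=> a x b Ha Hb Hab.
  set sa := ldiv op (op a a) e. set sb := ldiv op (op b b) e.
  set r := ldiv op (op x x) e.
  have Ssa : S sa by apply: (sub_inv HQ HS).
  have Ssb : S sb by apply: (sub_inv HQ HS).
  have [r' [E1 E2]] := GC HQ HS a x r Ssa.
  have E3 : ldiv op b e = op (op a x) r'.
    by rewrite -Hab (aip HQ) -(half HQ a) -(half HQ x) E1.
  have E4 : ldiv op b e = op b sb by rewrite (half HQ).
  rewrite Hab E4 in E3. have E5 := mul_inj HQ E3.
  apply: (sub_inv' HQ HS); apply/E2; by rewrite -E5.
split; first split.
- by rewrite (cal_lid HQ).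
- move=> a b Ha Hb.
  set sa := ldiv op (op a a) e. set sb := ldiv op (op b b) e.
  set z := op a b. set rz := ldiv op (op z z) e.
  have Ssa : S sa by apply: (sub_inv HQ HS).
  have Ssb : S sb by apply: (sub_inv HQ HS).
  have [r' [E1 E2]] := GC HQ HS a b sb Ssa.
  have E3 : ldiv op z e = op z r'.
    by rewrite /z (aip HQ) -(half HQ a) -(half HQ b) E1.
  rewrite -(half HQ z) in E3. have E5 := mul_inj HQ E3.
  apply: (sub_inv' HQ HS); rewrite E5; by apply/E2.
- move=> a b x Ha Hb Hx; exact: (key a x b).
- move=> a b x Ha Hb Hx; apply: (key a x b) => //; by rewrite (cal_comm HQ).
- move=> f Hf x Hx; rewrite -(cal_aut HQ); try by case: Hf.
  by apply: (H5).
Qed.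

Lemma H0_ext T (op : T -> T -> T) e (HQ : commutative_A_loop op e) x :
  x = e <-> H_n op e 0 x.
Proof. by rewrite /H_n expn0 /= (cal_rid HQ). Qed.

Lemma trivial_normal T (op : T -> T -> T) e (HQ : commutative_A_loop op e) :
  normal_subloop op e (fun x => x = e).
Proof.
split; first split.
- done.
- by move=> a b -> ->; rewrite (cal_lid HQ).
- by move=> a b x -> ->; rewrite (cal_lid HQ).
- by move=> a b x -> ->; rewrite (cal_rid HQ).
- by move=> f [_ Hf] x ->.
Qed.

Lemma part1 T (op : T -> T -> T) e (HQ : commutative_A_loop op e) n x :
  H_n op e n.+1 x <-> H_n op e n (lpow op e x 2).
Proof. by rewrite /H_n expnS (lpowM HQ). Qed.

Lemma part2 T (op : T -> T -> T) e (HQ : commutative_A_loop op e) n x :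
  H_n op e n x -> H_n op e n.+1 x.
Proof. by rewrite /H_n expnS mul2n -addnn (lpowD HQ) => ->; rewrite (cal_lid HQ). Qed.

Lemma mono T (op : T -> T -> T) e (HQ : commutative_A_loop op e) n k x :
  H_n op e n x -> H_n op e (n + k) x.
Proof.
elim: k => [|k IH]; first by rewrite addn0.
by move=> H; rewrite addnS; apply: (part2 HQ); apply: IH.
Qed.

Lemma part3 T (op : T -> T -> T) e (HQ : commutative_A_loop op e) n :
  normal_subloop op e (H_n op e n).
Proof.
elim: n => [|n IH].
  exact: (normal_ext (H0_ext HQ) (trivial_normal HQ)).
apply: (normal_ext _ (step HQ IH)) => x.
by rewrite (part1 HQ) /= (cal_rid HQ).
Qed.

Theorem theorem5p6 (T : Type) (op : T -> T -> T) (e : T)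
  (HQ : commutative_A_loop op e) :
  [/\ (forall n x, H_n op e n.+1 x <-> H_n op e n (lpow op e x 2)),
      (forall n x, H_n op e n x -> H_n op e n.+1 x),
      (forall n, normal_subloop op e (H_n op e n))
    & normal_subloop op e (H_all op e)].
Proof.
split.
- exact: (part1 HQ).
- exact: (part2 HQ).
- exact: (part3 HQ).
rewrite /H_all; split; first split.
- by exists 0; exact: (proj1 (H0_ext HQ e) erefl).
- move=> a b [n Ha] [m Hb]; exists (n + m).
  have [[_ H2 _ _] _] := part3 HQ (n + m).
  apply: (H2); first exact: (mono HQ).
  by rewrite addnC; apply: (mono HQ).
- move=> a b x [n Ha] [m Hb] Hx; exists (n + m).
  have [[_ _ H3 _] _] := part3 HQ (n + m).
  apply: (H3 a b) => //; first exact: (mono HQ).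
  by rewrite addnC; apply: (mono HQ).
- move=> a b x [n Ha] [m Hb] Hx; exists (n + m).
  have [[_ _ _ H4] _] := part3 HQ (n + m).
  apply: (H4 a b) => //; first exact: (mono HQ).
  by rewrite addnC; apply: (mono HQ).
- move=> f Hf x [n Hx]; exists n.
  have [_ H5] := part3 HQ n; exact: H5.
Qed.
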